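(* Let $p$ be an indecomposable permutation of $[n]$ avoiding $3241$ and $4321$ that contains $321$, with associated triple $(a,b,c)$. Then: (i) if $c$ is finite, all entries to the right of $a$ in $p$ are $\ge c$; (ii) if $c=\infty$, or if $c$ is finite and $c>b+1$, then $b+1$ lies to the left of $b$ in $p$; (iii) if $c=\infty$, then $a$ is the last entry of $p$; (iv) if $z>b$ is an entry of $p$, and in case $c$ is finite $z$ lies to the left of $c$ in $p$, then $z$ is a left-to-right maximum of $p$.
   Context: Permutations are in one-line notation; pattern containment/avoidance is classical. Indecomposable: no $k$, $1\le k\le n-1$, with $\{p_1,\dots,p_k\}=\{1,\dots,k\}$. An entry is a left-to-right maximum (LRMax) if it exceeds all entries to its left. The associated triple $(a,b,c)$ of a $321$-containing permutation: $a$ is the rightmost entry that plays the role of ''1'' in some occurrence of $321$; $b$ is the rightmost entry to the left of $a$ that exceeds $a$; $c$ is the first entry to the right of $a$ that is not a LRMax, with $c=\infty$ if no such entry exists. *)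

(* Defs.v *)
From mathcomp Require Import all_boot.
Set Implicit Arguments. Unset Strict Implicit. Unset Printing Implicit Defensive.

(* Permutations of [n] in one-line notation: a sequence p = p_1 ... p_n
   (stored 0-indexed: position i holds nth 0 p i) that is a rearrangement
   of 1, 2, ..., n. *)
Definition is_perm (n : nat) (p : seq nat) : Prop := perm_eq p (iota 1 n).

Definition contains (p q : seq nat) : Prop :=
  exists s : seq nat,
    [/\ size s = size q, sorted ltn s, all (fun i => i < size p) s &
        forall x y, x < size q -> y < size q ->
          (nth 0 p (nth 0 s x) < nth 0 p (nth 0 s y)) = (nth 0 q x < nth 0 q y)].

Definition avoids (p q : seq nat) : Prop := ~ contains p q.

Definition indecomposable (p : seq nat) : Prop :=
  forall k, 1 <= k -> k <= (size p).-1 -> ~ perm_eq (take k p) (iota 1 k).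

Definition LRMax (p : seq nat) (i : nat) : Prop :=
  i < size p /\ forall j, j < i -> nth 0 p j < nth 0 p i.

Definition role1_of_321 (p : seq nat) (i : nat) : Prop :=
  i < size p /\
  exists j k, [/\ j < k, k < i & nth 0 p i < nth 0 p k < nth 0 p j].

Definition is_a_pos (p : seq nat) (ia : nat) : Prop :=
  role1_of_321 p ia /\ forall i, role1_of_321 p i -> i <= ia.

Definition is_b_pos (p : seq nat) (ia ib : nat) : Prop :=
  [/\ ib < ia, nth 0 p ia < nth 0 p ib &
      forall j, j < ia -> nth 0 p ia < nth 0 p j -> j <= ib].

(* oc is the position of c: the first entry right of a that is not a LRMax;
   None encodes c = infinity (no such entry). *)
Definition is_c_pos (p : seq nat) (ia : nat) (oc : option nat) : Prop :=
  match oc with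
  | Some ic => [/\ ia < ic, ic < size p, ~ LRMax p ic &
                  forall j, ia < j -> j < ic -> LRMax p j]
  | None => forall j, ia < j -> j < size p -> LRMax p j
  end.

(* Main.v *)
Require Import Defs.
From mathcomp Require Import all_boot.
From mathcomp Require Import zify.

Lemma split_contra n p k : is_perm n p -> indecomposable p -> 0 < k -> k < size p ->
  (forall i j, i < k -> k <= j -> j < size p -> nth 0 p i < nth 0 p j) -> False.
Proof.
move=> Hp Hind k0 ks Hsp.
have Up : uniq p by rewrite (perm_uniq Hp) iota_uniq.
have Sp : size p = n by rewrite (perm_size Hp) size_iota.
have Mp x : (x \in p) = (0 < x <= n) by rewrite (perm_mem Hp) mem_iota add1n ltnS.
have Stk : size (take k p) = k by rewrite size_takel // ltnW.
have Utk : uniq (take k p) by exact: take_uniq.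
apply: (Hind k k0); first by lia.
have sub : {subset take k p <= iota 1 k}.
  move=> x xt. have xp : x \in p := mem_take xt. rewrite mem_iota add1n ltnS.
  have x1 : 0 < x by move: xp; rewrite Mp => /andP[].
  rewrite x1 /= leqNgt; apply/negP => xk.
  have ix : index x p < k by rewrite -in_take.
  have: size (x :: iota 1 k) <= size (take k p).
    apply: uniq_leq_size.
      rewrite /= iota_uniq andbT mem_iota; lia.
    move=> y; rewrite inE => /orP[/eqP -> //| ]. rewrite mem_iota => /andP[y1 yk].
    have yp : y \in p by rewrite Mp y1 /=; lia.
    rewrite in_take //. rewrite ltnNge; apply/negP => ky.
    have := Hsp _ _ ix ky; rewrite index_mem yp => /(_ isT). rewrite !nth_index //. lia.
  rewrite /= Stk size_iota; lia.
have [_ E] := uniq_min_size Utk sub ltac:(rewrite size_iota Stk; done).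
exact: uniq_perm Utk (iota_uniq _ _) E.
Qed.

Lemma notLR_wit p ic : uniq p -> ic < size p -> ~ LRMax p ic ->
  exists2 i, i < ic & nth 0 p ic < nth 0 p i.
Proof.
move=> Up ics HL.
case: (boolP (all (fun j => nth 0 p j < nth 0 p ic) (iota 0 ic))) => [/allP H | /allPn [i]].
  by exfalso; apply: HL; split => // j jic; apply: H; rewrite mem_iota.
rewrite mem_iota add0n => /andP[_ iic]; rewrite -leqNgt leq_eqVlt => /orP[/eqP E|]; last by exists i.
exfalso; have := nth_uniq 0 ics (ltn_trans iic ics) Up; rewrite E eqxx => /esym/eqP; lia.
Qed.

Lemma c4321 p i1 i2 i3 i4 : i1 < i2 -> i2 < i3 -> i3 < i4 -> i4 < size p ->
  nth 0 p i4 < nth 0 p i3 -> nth 0 p i3 < nth 0 p i2 -> nth 0 p i2 < nth 0 p i1 ->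
  contains p [:: 4; 3; 2; 1].
Proof.
move=> h12 h23 h34 h4 v43 v32 v21; exists [:: i1; i2; i3; i4]; split => //=.
- by rewrite h12 h23 h34.
- rewrite h4; apply/and4P; split => //; lia.
- case=> [|[|[|[|x]]]] // [|[|[|[|y]]]] //= _ _; lia.
Qed.

Lemma c3241 p i1 i2 i3 i4 : i1 < i2 -> i2 < i3 -> i3 < i4 -> i4 < size p ->
  nth 0 p i4 < nth 0 p i2 -> nth 0 p i2 < nth 0 p i1 -> nth 0 p i1 < nth 0 p i3 ->
  contains p [:: 3; 2; 4; 1].
Proof.
move=> h12 h23 h34 h4 v42 v21 v13; exists [:: i1; i2; i3; i4]; split => //=.
- by rewrite h12 h23 h34.
- rewrite h4; apply/and4P; split => //; lia.
- case=> [|[|[|[|x]]]] // [|[|[|[|y]]]] //= _ _; lia.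
Qed.

Theorem lemma7 (n : nat) (p : seq nat) :
  is_perm n p -> indecomposable p ->
  avoids p [:: 3; 2; 4; 1] -> avoids p [:: 4; 3; 2; 1] ->
  contains p [:: 3; 2; 1] ->
  forall (ia ib : nat) (oc : option nat),
    is_a_pos p ia -> is_b_pos p ia ib -> is_c_pos p ia oc ->
    let b := nth 0 p ib in
    (* (i) *)
    (forall ic, oc = Some ic ->
       forall j, ia < j -> j < size p -> nth 0 p ic <= nth 0 p j) /\
    (* (ii) *)
    ((oc = None \/ exists ic, oc = Some ic /\ b.+1 < nth 0 p ic) ->
       index b.+1 p < index b p) /\
    (* (iii) *)
    (oc = None -> ia = (size p).-1) /\
    (* (iv) *)
    (forall jz, jz < size p -> b < nth 0 p jz ->
       (forall ic, oc = Some ic -> jz < ic) -> LRMax p jz).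
Proof.
move=> Hp Hind av3241 av4321 _ ia ib oc [[Hia [j0 [k0 [Hjk Hk0 /andP[Hv1 Hv2]]]]] Hamax]
  [Hiba Hab Hbmax] Hc b.
have Up : uniq p by rewrite (perm_uniq Hp) iota_uniq.
have Sp : size p = n by rewrite (perm_size Hp) size_iota.
have Mp x : (x \in p) = (0 < x <= n) by rewrite (perm_mem Hp) mem_iota add1n ltnS.
have Bnd i : i < size p -> nth 0 p i <= n.
  by move=> isz; have := mem_nth 0 isz; rewrite Mp => /andP[].
have Neq i j : i < size p -> j < size p -> i != j -> nth 0 p i != nth 0 p j.
  by move=> ? ? ?; rewrite nth_uniq.
have notrole l : ia < l -> l < size p -> ~ role1_of_321 p l.
  by move=> h1 h2 /Hamax; lia.
have after_c ic : oc = Some ic -> forall l, ic < l -> l < size p -> nth 0 p ic <= nth 0 p l.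
  move=> E; rewrite E in Hc; case: Hc => hac hcs hnl _ l hl hls.
  have [i hi vi] := @notLR_wit p ic Up hcs hnl.
  rewrite leqNgt; apply/negP => vl; apply: (notrole l); [lia|done|].
  by split => //; exists i, ic; split => //; rewrite vl vi.
have part_i : forall ic, oc = Some ic ->
       forall j, ia < j -> j < size p -> nth 0 p ic <= nth 0 p j.
  move=> ic E j hj hjs.
  have Hc' := Hc; rewrite E in Hc'; case: Hc' => hac hcs hnl hlr.
  case: (ltngtP j ic) => [jc|cj|->]; last by [].
  - rewrite leqNgt; apply/negP => vj; exfalso.
    have [_ LRj] := hlr j hj jc.
    apply: (@split_contra n p j.+1 Hp Hind) => //; first by lia.
    move=> i l il jl ls.
    have vij : nth 0 p i <= nth 0 p j.
      by case: (ltngtP i j) => [/LRj /ltnW|/=|->] //; lia.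
    case: (ltngtP l ic) => [lc|cl|->]; last by lia.
    + have [_ LRl] := hlr l ltac:(lia) lc. have := LRl j ltac:(lia); lia.
    + have := after_c ic E l cl ls; lia.
  - exact: after_c E j cj hjs.
have part_iii : oc = None -> ia = (size p).-1.
  move=> E; rewrite E in Hc.
  case: (ltngtP ia (size p).-1) => [h|h|//]; last by lia.
  exfalso; apply: (@split_contra n p ia.+1 Hp Hind) => //; first by lia.
  move=> i l il al ls. have [_ LRl] := Hc l al ls. by apply: LRl; lia.
split; first exact: part_i.
split.
  move=> H.
  have bn : b < n.
    case: H => [E|[ic [E bc]]]; last first.
      have := Bnd ic; rewrite E in Hc; case: Hc => _ hcs _ _; move/(_ hcs). lia.
    rewrite ltnNge; apply/negP => nb; apply: av3241.
    have k0ib : k0 <= ib by apply: Hbmax; lia.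
    have j0s : j0 < size p by lia.
    have := Bnd j0 j0s => bj0.
    case: (ltngtP k0 ib) => [k0ib'|hh|k0e]; [|lia|by rewrite k0e in Hv2; rewrite /b in nb; lia].
    apply: (@c3241 p j0 k0 ib ia) => //.
    have := Neq j0 ib j0s ltac:(lia) ltac:(apply/eqP; lia). rewrite /b in nb. lia.
  have bp : b.+1 \in p by rewrite Mp; lia.
  set q := index b.+1 p.
  have qs : q < size p by rewrite index_mem.
  have vq : nth 0 p q = b.+1 by rewrite nth_index.
  have -> : index b p = ib by rewrite /b index_uniq //; apply: ltn_trans Hiba Hia.
  rewrite ltnNge; apply/negP => ibq.
  case: (ltngtP q ib) => [hh|ibq'|qib]; [lia| |by rewrite qib /b in vq; lia].
  case: (ltngtP q ia) => [qa|aq|qa]; last by rewrite qa /b in vq; lia.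
  - have := Hbmax q qa ltac:(rewrite vq; lia); lia.
  - case: H => [E|[ic [E bc]]].
      have := part_iii E; lia.
    have := part_i ic E q aq qs; rewrite vq /b; lia.
split; first exact: part_iii.
move=> jz jzs bz hz.
case: (ltngtP jz ia) => [jza|ajz|jze]; last by rewrite jze /b in bz; lia.
- case: (ltngtP jz ib) => [jzb|bjz|jzb]; last by rewrite jzb /b in bz; lia.
  + split => // j jj; rewrite ltnNge; apply/negP => vj; apply: av4321.
    apply: (@c4321 p j jz ib ia) => //; try lia.
    have := Neq j jz ltac:(lia) jzs ltac:(apply/eqP; lia); lia.
  + have := Hbmax jz jza ltac:(rewrite /b in bz; lia); lia.
- clear after_c part_i part_iii; case: oc Hc hz => [ic|] Hc hz.
  + case: Hc => _ _ _ hlr; exact: hlr jz ajz (hz ic erefl).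
  + exact: Hc jz ajz jzs.
Qed.
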